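(* For $x\in(0,1)$, let $\lambda\in\mathbb{R}$ be the solution of $x=e^{-e^{\lambda}}(e^{\lambda}+1)$. Then $$\lambda-\log(-\log x)\le\log\tfrac23+\log\Big(1+\sqrt{1-\tfrac{9}{2\log x}}\Big)$$ and $$\lambda-\log(-\log x)\ge-\log 2+\log\Big(1+\sqrt{1-\tfrac{8}{\log x}}\Big).$$
   Context: $\log$ denotes the natural logarithm. *)

(* Defs.v *)
From Stdlib Require Export Reals.

(* Main.v *)
Require Import Defs.
From Coquelicot Require Import Coquelicot.
From Stdlib Require Import Reals Lra.
Open Scope R_scope.

Lemma mono0 (f df : R -> R) (t : R) : 0 < t ->
  (forall s, 0 <= s -> is_derive f s (df s)) ->
  (forall s, 0 <= s -> 0 <= df s) -> f 0 <= f t.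
Proof.
  intros Ht Hd Hp.
  destruct (MVT_gen f 0 t df) as [c [Hc Heq]].
  - intros s Hs. rewrite Rmin_left in Hs by lra. apply Hd. lra.
  - intros s Hs. rewrite Rmin_left in Hs by lra.
    apply continuity_pt_filterlim. apply (ex_derive_continuous (V:=R_NormedModule)).
    eexists. apply Hd. lra.
  - rewrite Rmin_left in Hc by lra.
    assert (0 <= df c) by (apply Hp; lra). nra.
Qed.

Lemma lowln (t : R) : 0 < t -> 2 * t / (t + 2) <= ln (1 + t).
Proof.
  intros Ht.
  pose (g := fun s => ln (1 + s) - 2 * s / (s + 2)).
  pose (dg := fun s => s * s / ((1 + s) * ((s + 2) * (s + 2)))).
  assert (H := mono0 g dg t Ht).
  assert (g 0 = 0) by (unfold g; rewrite Rplus_0_r, ln_1; field).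
  cut (0 <= g t). { unfold g; lra. }
  rewrite <- H0. apply H.
  - intros s Hs. unfold g, dg. auto_derive.
    + repeat split; lra.
    + field; lra.
  - intros s Hs. unfold dg. apply Rmult_le_pos. nra.
    apply Rlt_le, Rinv_0_lt_compat. apply Rmult_lt_0_compat; nra.
Qed.

Lemma upln (t : R) : 0 < t -> ln (1 + t) <= t * (t + 6) / (4 * t + 6).
Proof.
  intros Ht.
  pose (g := fun s => s * (s + 6) / (4 * s + 6) - ln (1 + s)).
  pose (dg := fun s => s * (s * s) / ((1 + s) * ((2 * s + 3) * (2 * s + 3)))).
  assert (H := mono0 g dg t Ht).
  assert (g 0 = 0) by (unfold g; rewrite Rplus_0_r, ln_1; field).
  cut (0 <= g t). { unfold g; lra. }
  rewrite <- H0. apply H.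
  - intros s Hs. unfold g, dg. auto_derive.
    + repeat split; lra.
    + field; lra.
  - intros s Hs. unfold dg. apply Rmult_le_pos. nra.
    apply Rlt_le, Rinv_0_lt_compat. apply Rmult_lt_0_compat; nra.
Qed.

Lemma lnle (a b : R) : 0 < a -> a <= b -> ln a <= ln b.
Proof. intros Ha [H|H]. apply Rlt_le, ln_increasing; auto. subst; lra. Qed.

Theorem lemma1 (x lam : R) :
  0 < x < 1 ->
  x = exp (- exp lam) * (exp lam + 1) ->
  lam - ln (- ln x) <= ln (2 / 3) + ln (1 + sqrt (1 - 9 / (2 * ln x))) /\
  lam - ln (- ln x) >= - ln 2 + ln (1 + sqrt (1 - 8 / ln x)).
Proof.
  intros [Hx0 Hx1] Hx.
  assert (Ht : 0 < exp lam) by apply exp_pos.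
  assert (Hlam : lam = ln (exp lam)) by (rewrite ln_exp; auto).
  set (t := exp lam) in *. rewrite Hlam. clearbody t. clear Hlam.
  assert (Hl : ln x = - (t - ln (1 + t))).
  { rewrite Hx, ln_mult, ln_exp; [|apply exp_pos|lra]. rewrite (Rplus_comm t 1). ring. }
  assert (U := upln t Ht). assert (Lo := lowln t Ht).
  set (l := ln (1 + t)) in *. clearbody l.
  set (L := t - l) in *.
  assert (Hu : l * (4 * t + 6) <= t * (t + 6)).
  { assert (h := Rmult_le_compat_r (4 * t + 6) _ _ ltac:(lra) U).
    replace (t * (t + 6) / (4 * t + 6) * (4 * t + 6)) with (t * (t + 6)) in h by (field; lra). lra. }
  assert (Hlo : 2 * t <= l * (t + 2)).
  { assert (h := Rmult_le_compat_r (t + 2) _ _ ltac:(lra) Lo).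
    replace (2 * t / (t + 2) * (t + 2)) with (2 * t) in h by (field; lra). lra. }
  assert (HL : 0 < L) by (unfold L; nra).
  assert (Hl0 : 0 < l) by nra.
  rewrite Hl. replace (- - L) with L by ring.
  replace (ln t - ln L) with (ln (t * / L))
    by (rewrite ln_mult, ln_Rinv; try apply Rinv_0_lt_compat; lra).
  set (w := / L).
  assert (Hw : L * w = 1) by (unfold w; field; lra).
  assert (Hw0 : 0 < w) by (unfold w; apply Rinv_0_lt_compat; lra).
  replace (9 / (2 * - L)) with (- (9/2) * w) by (unfold w; field; lra).
  replace (8 / - L) with (- 8 * w) by (unfold w; field; lra).
  split.
  - set (S := sqrt (1 - - (9 / 2) * w)).
    assert (HS : 0 <= S) by apply sqrt_pos.
    rewrite <- ln_mult by lra.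
    apply lnle. nra.
    assert (3/2 * (t * w) - 1 <= S).
    { destruct (Rle_dec (3/2 * (t * w) - 1) 0) as [h|h]. lra.
      unfold S. rewrite <- (sqrt_pow2 (3/2 * (t * w) - 1)) by lra.
      apply sqrt_le_1_alt.
      assert (3 * t^2 <= L * (4 * t + 6)) by (unfold L; nra).
      assert (3 * t^2 * (w * w) <= L * (4 * t + 6) * (w * w)) by nra.
      replace (L * (4 * t + 6) * (w * w)) with ((4 * t + 6) * w) in H0
        by (replace (L * (4 * t + 6) * (w * w)) with ((4 * t + 6) * w * (L * w)) by ring; rewrite Hw; ring).
      nra. }
    lra.
  - set (S := sqrt (1 - - 8 * w)).
    assert (HS : 0 <= S) by apply sqrt_pos.
    rewrite <- (ln_Rinv 2), <- ln_mult by lra.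
    apply Rle_ge, lnle. nra.
    assert (S <= 2 * (t * w) - 1).
    { assert (t * w >= 1).
      { assert ((t - L) * w >= 0) by (apply Rle_ge, Rmult_le_pos; unfold L; lra). nra. }
      unfold S. rewrite <- (sqrt_pow2 (2 * (t * w) - 1)) by lra.
      apply sqrt_le_1_alt.
      assert (2 * L <= t * (t - L)) by (unfold L; nra).
      assert (2 * L * (w * w) <= t * (t - L) * (w * w)) by nra.
      replace (2 * L * (w * w)) with (2 * w) in H1
        by (replace (2 * L * (w * w)) with (2 * w * (L * w)) by ring; rewrite Hw; ring).
      replace (t * (t - L) * (w * w)) with (t * t * w * w - t * w) in H1
        by (replace (t * (t - L) * (w * w)) with (t * t * w * w - t * w * (L * w)) by ring; rewrite Hw; ring).
      nra. }
    lra.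
Qed.
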